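(* Let $k\ge 16$, $n=2^k$, $t=\lceil 2\log k\rceil$, and let $P$ be an isothetic drawing of the Horton set of $n$ points with slab $R$ as in the context. Then either $P$ has size at least $n^{\frac12\log n}$, or there exist vertical lines $\ell_1,\ell_2,\ell_3,\ell_4$, ordered from left to right and all contained in the interior of $R$, such that exactly $2^{k-t}$ points of $P$ lie between $\ell_1$ and $\ell_2$, exactly $2^{k-t}$ points of $P$ lie between $\ell_3$ and $\ell_4$, and, writing $d_1$ for the distance between $\ell_1$ and $\ell_2$ and $d_2$ for the distance between $\ell_3$ and $\ell_4$, we have $\frac12\le d_1/d_2\le 2$.
   Context: All logarithms are base 2. For a finite set $S$ of points in the plane with pairwise distinct $x$-coordinates, list its points in increasing order of $x$-coordinate as $p_0,\dots,p_{|S|-1}$ and set $S_{\mathrm{even}}=\{p_0,p_2,\dots\}$, $S_{\mathrm{odd}}=\{p_1,p_3,\dots\}$. For point sets $X,Y$, $X$ is high above $Y$ if every line through two points of $X$ lies strictly above every point of $Y$ and every line through two points of $Y$ lies strictly below every point of $X$. A Horton set of $2^k$ points is defined recursively: a set $H$ of $2^k$ points, no three collinear, with pairwise distinct $x$-coordinates, such that for $k=0$ it is a single point and for $k\ge1$ both $H_{\mathrm{even}}$ and $H_{\mathrm{odd}}$ are Horton sets of $2^{k-1}$ points and $H_{\mathrm{odd}}$ is high above $H_{\mathrm{even}}$. An isothetic drawing of the Horton set of $n=2^k$ points is a Horton set of $n$ points all of whose points have integer coordinates. The size of a set of points is the maximum absolute value of the coordinates of its points. With $p_0,\dots,p_{n-1}$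 the points of $P$ sorted by $x$-coordinate, $R$ is the closed vertical slab bounded by the vertical lines through $p_{n/4}$ and $p_{3n/4-1}$. *)

(* Defs.v *)
(* Points are pairs of integers; a finite point set with
   pairwise distinct x-coordinates is represented by the list of its points
   sorted by strictly increasing x-coordinate. *)
From HB Require Import structures.
From mathcomp Require Import all_boot all_order all_algebra.
Set Implicit Arguments. Unset Strict Implicit. Unset Printing Implicit Defensive.
Import Order.TTheory GRing.Theory Num.Theory.
Local Open Scope ring_scope.

Definition point := (int * int)%type.

Definition ltx (p q : point) : bool := p.1 < q.1.

Definition orient (p q r : point) : int :=
  (q.1 - p.1) * (r.2 - p.2) - (q.2 - p.2) * (r.1 - p.1).

Definition evens (s : seq point) : seq point :=
  [seq nth (0, 0) s i | i <- iota 0 (size s) & ~~ odd i].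
Definition odds (s : seq point) : seq point :=
  [seq nth (0, 0) s i | i <- iota 0 (size s) & odd i].

Definition no_three_collinear (s : seq point) : Prop :=
  forall i j l : nat, (i < j)%N -> (j < l)%N -> (l < size s)%N ->
    orient (nth (0,0) s i) (nth (0,0) s j) (nth (0,0) s l) != 0.

(* For a < b in x-order, a point y lies
   strictly below the line ab iff orient a b y < 0, strictly above iff > 0. *)
Definition high_above (X Y : seq point) : Prop :=
  (forall a b y, a \in X -> b \in X -> ltx a b -> y \in Y -> orient a b y < 0)
  /\ (forall c d x, c \in Y -> d \in Y -> ltx c d -> x \in X -> 0 < orient c d x).

Fixpoint horton (k : nat) (s : seq point) : Prop :=
  [/\ sorted ltx s, no_three_collinear s, size s = (2 ^ k)%N &
    match k with
    | 0 => True
    | k'.+1 => [/\ horton k' (evens s), horton k' (odds s) & high_above (odds s) (evens s)]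
    end].

Definition pset_size (s : seq point) : nat :=
  \max_(p <- s) maxn `|p.1|%N `|p.2|%N.

Definition count_between (R : realFieldType) (s : seq point) (a b : R) : nat :=
  count (fun p : point => (a < p.1%:~R) && (p.1%:~R < b)) s.

(* Main.v *)
Require Import Defs.
From HB Require Import structures.
From mathcomp Require Import all_boot all_order all_algebra zify lra.
Import Order.TTheory GRing.Theory Num.Theory.
Local Open Scope ring_scope.

Lemma horton_basic k s : horton k s -> sorted ltx s /\ size s = (2 ^ k)%N.
Proof. by case: k => [|k] /= [? _ ? _]. Qed.

Definition xc (P : seq point) (i : nat) : int := (nth (0,0) P i).1.

Lemma ltx_trans : transitive ltx.
Proof. move=> a b c; rewrite /ltx; exact: lt_trans. Qed.

Lemma xc_lt (P : seq point) (i j : nat) : sorted ltx P -> (i < j)%N -> (j < size P)%N -> xc P i < xc P j.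
Proof.
move=> hs hij hj.
have := sorted_ltn_nth ltx_trans (0,0) hs; move=> /(_ i j); rewrite !inE.
by apply => //; apply: ltn_trans hj.
Qed.

Lemma xc_le P i j : sorted ltx P -> (i < size P)%N -> (j < size P)%N ->
  (xc P i <= xc P j) = (i <= j)%N.
Proof.
move=> hs hi hj; case: (ltngtP i j) => h.
- by apply/ltW; apply: xc_lt.
- by apply/negbTE; rewrite -ltNge; apply: xc_lt.
- by rewrite h lexx.
Qed.

Lemma xc_d P i d : sorted ltx P -> (i + d < size P)%N -> xc P i + d%:Z <= xc P (i + d).
Proof.
move=> hs; elim: d => [|d IH] h; first by rewrite addn0 addr0.
have h1 : (i + d < size P)%N by lia.
have h2 : ((i + d).+1 < size P)%N by rewrite -addnS.
have := IH h1; have := xc_lt P (i + d) (i + d).+1 hs (ltnSn (i + d)) h2.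
rewrite addnS; lia.
Qed.

Lemma int_lo (R : realFieldType) (u v : int) :
  ((u%:~R - 1/4 < v%:~R :> R)) = (u <= v).
Proof.
case: (leP u v) => h.
- by move: h; rewrite -(ler_int R) => h; apply/idP; lra.
- have : v + 1 <= u by lia.
  rewrite -(ler_int R) intrD => h2; apply/negbTE; rewrite -leNgt; lra.
Qed.

Lemma int_hi (R : realFieldType) (u v : int) :
  ((v%:~R < u%:~R + 1/4 :> R)) = (v <= u).
Proof.
case: (leP v u) => h.
- by move: h; rewrite -(ler_int R) => h; apply/idP; lra.
- have : u + 1 <= v by lia.
  rewrite -(ler_int R) intrD => h2; apply/negbTE; rewrite -leNgt; lra.
Qed.

Lemma int_lt (R : realFieldType) (u v : int) : u < v -> (u%:~R + 1 <= v%:~R :> R).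
Proof. move=> h; have : u + 1 <= v by lia. by rewrite -(ler_int R) intrD. Qed.

Lemma count_iota_block a m sz : (0 < m)%N -> (a + m <= sz)%N ->
  count (fun i => (a <= i)%N && (i <= a + m - 1)%N) (iota 0 sz) = m.
Proof.
move=> hm h.
have -> : sz = (a + (m + (sz - (a + m))))%N by lia.
rewrite !iotaD !count_cat add0n.
rewrite (eq_in_count (a2 := pred0)); last by move=> i; rewrite mem_iota /=; lia.
rewrite (eq_in_count (a1 := fun i => _ && _) (a2 := predT) (s := iota a m)); last first.
  by move=> i; rewrite mem_iota /=; lia.
rewrite (eq_in_count (a2 := pred0) (s := iota (a + m) _)); last first.
  by move=> i; rewrite mem_iota /=; lia.
by rewrite !count_pred0 count_predT size_iota; lia.
Qed.

Lemma count_block (R : realFieldType) P a m : sorted ltx P -> (0 < m)%N ->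
  (a + m <= size P)%N ->
  count_between P ((xc P a)%:~R - 1/4 : R) ((xc P (a + m - 1))%:~R + 1/4) = m.
Proof.
move=> hs hm ham; rewrite /count_between -[X in count _ X](mkseq_nth (0,0) P) /mkseq count_map.
rewrite -[RHS](count_iota_block _ _ _ hm ham); apply: eq_in_count => i; rewrite mem_iota /= => hi.
rewrite int_lo int_hi -/(xc P i) !xc_le //; lia.
Qed.
Lemma sq_le k : (16 <= k)%N -> (k * k <= 2 ^ (k - 4))%N.
Proof.
elim: k => // k IH hk.
case: (ltngtP k 15) => h; first lia.
- have := IH h; have -> : (k.+1 - 4 = (k - 4).+1)%N by lia.
  rewrite expnS; nia.
- by subst k.
Qed.

Lemma xc_abs P i : (i < size P)%N -> (`|xc P i| <= pset_size P)%N.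
Proof.
move=> hi; rewrite /pset_size.
have := @leq_bigmax_seq _ P (fun _ => true) (fun p : point => maxn `|p.1|%N `|p.2|%N) (nth (0,0) P i) (mem_nth _ hi) isT.
by rewrite /xc; apply: leq_trans; apply: leq_maxl.
Qed.

Theorem lemma3 (R : realFieldType) (k : nat) (P : seq point) :
  (16 <= k)%N ->
  horton k P ->
  let n := (2 ^ k)%N in
  let t := up_log 2 (k * k) in
  let xL : R := (nth (0,0) P (n %/ 4)).1%:~R in
  let xR : R := (nth (0,0) P (3 * n %/ 4 - 1)).1%:~R in
  (* size >= n^{(1/2) log n} = 2^{k^2/2}, i.e. size^2 >= 2^{k^2} *)
  (2 ^ (k * k) <= pset_size P ^ 2)%N
  \/ exists l1 l2 l3 l4 : R,
       [/\ (xL < l1) && (l1 < l2) && (l2 < l3) && (l3 < l4) && (l4 < xR),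
           count_between P l1 l2 = (2 ^ (k - t))%N,
           count_between P l3 l4 = (2 ^ (k - t))%N &
           (1 / 2 <= (l2 - l1) / (l4 - l3) <= 2)].
Proof.
move=> hk /horton_basic [hs hsz] n t xL xR.
have ht1 : (k * k <= 2 ^ t)%N by apply: up_logP.
have htk : (t <= k - 4)%N by apply: up_log_min => //; apply: sq_le.
have ht0 : (0 < t)%N by rewrite /t up_log_gt0 /=; nia.
set m := (2 ^ (k - t))%N.
set T := (2 ^ (t - 1))%N.
set Q := (2 ^ (k - 2))%N.
set L := (k - t - 1)%N.
have e2 : forall a b, (b <= a)%N -> (2 ^ a = 2 ^ (a - b) * 2 ^ b)%N.
  by move=> a b hab; rewrite -expnD subnK.
have hn : n = (4 * Q)%N.
  by rewrite /n /Q (e2 k 2%N) 1?mulnC //; lia.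
have hQ : (2 * Q = T * m)%N.
  rewrite /Q /T /m -expnS (e2 (k - 2)%N.+1 (k - t)%N); last by lia.
  congr (2 ^ _ * _)%N; lia.
have hT : (2 ^ t = 2 * T)%N by rewrite /T -expnS; congr (2 ^ _)%N; lia.
have hmL : (m = 2 * 2 ^ L)%N by rewrite /m /L -expnS; congr (2 ^ _)%N; lia.
have hm16 : (16 <= m)%N by rewrite /m (_ : 16 = 2 ^ 4)%N // leq_pexp2l //; lia.
have hQ4 : (n %/ 4 = Q)%N by rewrite hn mulKn.
have hQ3 : (3 * n %/ 4 = 3 * Q)%N by rewrite hn mulnCA mulKn.
rewrite /xL /xR hQ4 hQ3 -/(xc P Q) -/(xc P (3 * Q - 1)).
set N := (T - 1)%N.
pose a j := (Q + 1 + j * m)%N.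
pose e j := (a j + m - 1)%N.
pose s j := `|xc P (e j) - xc P (a j)|%N.
pose c j := trunc_log 2 (s j).
have hsize : size P = (4 * Q)%N by rewrite hsz -/n hn.
have he_lt j : (j < N)%N -> (e j < 3 * Q - 1)%N by move=> hj; rewrite /e /a; nia.
have hd j : (j < N)%N -> xc P (a j) + (m - 1)%N%:Z <= xc P (e j).
  move=> hj; have := xc_d P (a j) (m - 1) hs.
  have -> : (a j + (m - 1) = e j)%N by rewrite /e; lia.
  have := he_lt j hj; rewrite hsize => h1 h2.
  have h3 : (e j < 4 * Q)%N by lia.
  exact: h2 h3.
have hs_eq j : (j < N)%N -> (s j)%:Z = xc P (e j) - xc P (a j).
  by move=> hj; have := hd j hj; rewrite /s; lia.
have hs_ge j : (j < N)%N -> (m - 1 <= s j)%N.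
  by move=> hj; have := hd j hj; have := hs_eq j hj; lia.
have hL0 : (0 < 2 ^ L)%N by rewrite expn_gt0.
have hc_ge j : (j < N)%N -> (L <= c j)%N.
  move=> hj; apply: trunc_log_max => //; have := hs_ge j hj; lia.
have hN : (1 <= N)%N by rewrite /N; nia.
have hxc i0 j0 : (i0 < j0)%N -> (j0 < size P)%N -> xc P i0 < xc P j0.
  by move=> h1 h2; apply: xc_lt.
case: (boolP (uniq (map c (iota 0 N)))) => [hu|].
- left.
  case: (boolP (has (fun j => L + N - 1 <= c j)%N (iota 0 N))) => [/hasP [j hj hcj] | hnh].
  + rewrite mem_iota in hj.
    have hj' : (j < N)%N by lia.
    have hsj0 : (0 < s j)%N by have := hs_ge j hj'; lia.
    have h1 := trunc_logP (isT : (1 < 2)%N) hsj0.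
    have h2 : (s j <= 2 * pset_size P)%N.
      have hlt := he_lt j hj'.
      have ha := xc_abs P (a j); have he := xc_abs P (e j).
      rewrite hsize in ha he.
      have hae : (a j <= e j)%N by rewrite /e; lia.
      have := ha ltac:(lia); have := he ltac:(lia); rewrite /s; lia.
    have h3 : (2 ^ (L + N - 1) <= 2 ^ (c j))%N by rewrite leq_pexp2l.
    have h4 : (2 ^ (L + N - 2) <= pset_size P)%N.
      move: h3; rewrite (_ : (L + N - 1 = (L + N - 2).+1)%N); last by lia.
      rewrite expnS; rewrite -/(c j) in h1; lia.
    apply: (@leq_trans (2 ^ ((L + N - 2) * 2))).
      rewrite leq_pexp2l //; rewrite /L /N; lia.
    by rewrite expnM leq_exp2r.
  + exfalso.
    have := @uniq_leq_size _ _ (iota L (N - 1)) hu.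
    rewrite size_map !size_iota => H; suff : (N <= N - 1)%N by lia.
    apply: H => y /mapP [j hj ->]; rewrite mem_iota.
    move/hasPn: hnh => /(_ j hj); rewrite mem_iota in hj.
    have := hc_ge j ltac:(lia); lia.
- move/(uniqPn 0%N) => [i [j [hij hjN heq]]].
  rewrite size_map size_iota in hjN.
  have hiN : (i < N)%N by lia.
  rewrite !(nth_map 0%N) ?size_iota // !nth_iota // in heq.
  rewrite !add0n in heq.
  right.
  exists ((xc P (a i))%:~R - 1/4), ((xc P (e i))%:~R + 1/4),
    ((xc P (a j))%:~R - 1/4), ((xc P (e j))%:~R + 1/4).
  have hej := he_lt j hjN; have hei := he_lt i hiN.
  have hdi := hd i hiN; have hdj := hd j hjN.
  have hai : (a i <= e i)%N by rewrite /e; lia.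
  have haj : (a j <= e j)%N by rewrite /e; lia.
  split.
  + have o1 := int_lt R _ _ (hxc Q (a i) ltac:(rewrite /a; lia) ltac:(rewrite hsize; lia)).
    have hij' : (e i < a j)%N.
      rewrite /e /a; have : (i.+1 * m <= j * m)%N by rewrite leq_mul2r hij orbT.
      lia.
    have o2 := int_lt R _ _ (hxc (e i) (a j) hij' ltac:(rewrite hsize; lia)).
    have o3 := int_lt R _ _ (hxc (e j) (3 * Q - 1)%N ltac:(lia) ltac:(rewrite hsize; lia)).
    have o4 : ((xc P (a i))%:~R <= (xc P (e i))%:~R :> R) by rewrite ler_int; lia.
    have o5 : ((xc P (a j))%:~R <= (xc P (e j))%:~R :> R) by rewrite ler_int; lia.
    rewrite -!andbA; apply/and5P; split; lra.
  + apply: count_block => //; [lia | rewrite hsize; move: hei; rewrite /e; lia].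
  + apply: count_block => //; [lia | rewrite hsize; move: hej; rewrite /e; lia].
  + have hsi := hs_eq i hiN; have hsj := hs_eq j hjN.
    have E1 : (xc P (e i))%:~R + 1/4 - ((xc P (a i))%:~R - 1/4) = (s i)%:R + 1/2 :> R.
      by rewrite -[(s i)%:R]/(((s i)%:Z)%:~R) hsi intrB; lra.
    have E2 : (xc P (e j))%:~R + 1/4 - ((xc P (a j))%:~R - 1/4) = (s j)%:R + 1/2 :> R.
      by rewrite -[(s j)%:R]/(((s j)%:Z)%:~R) hsj intrB; lra.
    rewrite E1 E2.
    have hsi0 : (0 < s i)%N by have := hs_ge i hiN; lia.
    have hsj0 : (0 < s j)%N by have := hs_ge j hjN; lia.
    have bi := trunc_log_bounds (isT : (1 < 2)%N) hsi0.
    have bj := trunc_log_bounds (isT : (1 < 2)%N) hsj0.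
    move: bi bj; rewrite /= -/(c i) -/(c j) heq expnS => /andP [bi1 bi2] /andP [bj1 bj2].
    have r1 : (s i < 2 * s j)%N by lia.
    have r2 : (s j < 2 * s i)%N by lia.
    move: r1 r2; rewrite -(ltr_nat R) -(ltr_nat R) !natrM => r1 r2.
    have p0 : (0 : R) <= (s j)%:R by apply: ler0n.
    have p1 : (0 : R) <= (s i)%:R by apply: ler0n.
    have hz : (0 : R) < (s j)%:R + 1/2 by lra.
    rewrite ler_pdivlMr // ler_pdivrMr //; apply/andP; split; lra.
Qed.
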